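(* Let $k_+,k_-,t$ be integers with $0\leq k_-\leq k_+$, $k_++k_-\geq 1$ and $t>0$. Then for any real number $\epsilon>0$ there is an integer $\lambda$ and infinitely many values of $n$ such that $\mathbb{Z}^n$ can be $\lambda$-lattice-packed by $\mathcal{B}(n,t,k_+,k_-)$ with density $\delta=\Omega(n^{-\epsilon})$.
   Context: $\mathcal{B}(n,t,k_+,k_-)=\{\mathbf{x}\in\mathbb{Z}^n : -k_-\le x_i\le k_+ \text{ for all } i,\ \mathrm{wt}(\mathbf{x})\le t\}$, where $\mathrm{wt}$ is the Hamming weight. A set $\mathcal{B}\subseteq\mathbb{Z}^n$ $\lambda$-packs $\mathbb{Z}^n$ by a lattice $\Lambda\subseteq\mathbb{Z}^n$ if every $\mathbf{z}\in\mathbb{Z}^n$ lies in $\mathbf{v}+\mathcal{B}$ for at most $\lambda$ distinct $\mathbf{v}\in\Lambda$; the density is $|\mathcal{B}|/\mathrm{vol}(\Lambda)$ with $\mathrm{vol}(\Lambda)=|\mathbb{Z}^n/\Lambda|$. The asymptotic notation refers to $n\to\infty$ along these values, with $\epsilon,t,k_\pm$ fixed. *)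

(* Defs.v *)
From HB Require Import structures.
From Stdlib Require Import Rdefinitions Raxioms RIneq Rpower.
From mathcomp Require Import all_boot all_order all_algebra.
Set Implicit Arguments. Unset Strict Implicit. Unset Printing Implicit Defensive.
Import Order.TTheory GRing.Theory Num.Theory.
Local Open Scope ring_scope.

Definition wt (n : nat) (x : 'rV[int]_n) : nat := #|[set i : 'I_n | x ord0 i != 0]|.

Definition inB (n t kp km : nat) (x : 'rV[int]_n) : bool :=
  [forall i : 'I_n, (- (km%:Z) <= x ord0 i) && (x ord0 i <= kp%:Z)] && (wt x <= t)%N.

(* |B(n,t,k+,k-)|: count the points of the box {-k-,...,k+}^n (encoded
   injectively by f |-> (f i - k-)_i) that lie in B. *)
Definition card_B (n t kp km : nat) : nat :=
  #|[set f : {ffun 'I_n -> 'I_(kp + km + 1)} |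
       inB t kp km (\row_i ((nat_of_ord (f i))%:Z - km%:Z))]|.

Definition is_lattice (n : nat) (L : 'rV[int]_n -> Prop) : Prop :=
  L 0 /\ (forall x y, L x -> L y -> L (x - y)).

(* vol(Lambda) = |Z^n / Lambda| = v : there is a complete system of v
   pairwise incongruent coset representatives. *)
Definition has_index (n : nat) (L : 'rV[int]_n -> Prop) (v : nat) : Prop :=
  exists r : 'I_v -> 'rV[int]_n,
    (forall z, exists i, L (z - r i)) /\
    (forall i j, L (r i - r j) -> i = j).

Definition lambda_packs (n : nat) (B : 'rV[int]_n -> bool)
    (L : 'rV[int]_n -> Prop) (lam : nat) : Prop :=
  forall (z : 'rV[int]_n) (s : seq 'rV[int]_n), uniq s ->
    (forall v, v \in s -> L v /\ B (z - v)) -> (size s <= lam)%N.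

(* Main.v *)
Require Import Defs.
From Stdlib Require Import Rdefinitions Raxioms RIneq Rpower.
From Stdlib Require Import Reals Lra Lia.


Lemma pow_lt_strict (a b : R) (k : nat) : (0 <= a)%R -> (a < b)%R -> (a ^ S k < b ^ S k)%R.
Proof.
intros ha hab. simpl.
assert (h1 : (a ^ k <= b ^ k)%R) by (apply pow_incr; lra).
assert (h2 : (0 < b ^ k)%R) by (apply pow_lt; lra).
assert (h3 : (0 <= a ^ k)%R) by (apply pow_le; lra).
nra.
Qed.

Lemma real_bound (Dn nn bn Mn vn r t : nat) (eps : R) :
  (0 < r)%nat -> (0 < Dn)%nat -> (0 < nn)%nat -> (0 < bn)%nat -> (0 < vn)%nat ->
  (vn <= Mn)%nat -> (INR t <= INR r * eps)%R ->
  (Mn ^ r <= Dn * nn ^ t * bn ^ r)%nat ->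
  (Rpower (INR Dn) (- / INR r) * Rpower (INR nn) (- eps) <= INR bn / INR vn)%R.
Proof.
intros hr hD hn hb hv hvM ht hM.
assert (Dp : (0 < INR Dn)%R) by (apply lt_0_INR; lia).
assert (np : (1 <= INR nn)%R) by (apply (le_INR 1); lia).
assert (bp : (0 < INR bn)%R) by (apply lt_0_INR; lia).
assert (vp : (0 < INR vn)%R) by (apply lt_0_INR; lia).
assert (Mp : (0 < INR Mn)%R) by (apply lt_0_INR; lia).
assert (rp : (0 < INR r)%R) by (apply lt_0_INR; lia).
set (x := (Rpower (INR Dn) (- / INR r) * Rpower (INR nn) (- eps))%R).
assert (xp : (0 < x)%R).
{ unfold x, Rpower. apply Rmult_lt_0_compat; apply exp_pos. }
set (y := (INR bn / INR Mn)%R).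
assert (yp : (0 < y)%R) by (unfold y; apply Rdiv_lt_0_compat; lra).
assert (hyv : (y <= INR bn / INR vn)%R).
{ unfold y, Rdiv. apply Rmult_le_compat_l; [lra|]. apply Rinv_le_contravar; [lra|].
  apply le_INR; lia. }
enough (x <= y)%R by lra.
assert (hxr : (x ^ r = / INR Dn * Rpower (INR nn) (- (eps * INR r)))%R).
{ rewrite <- Rpower_pow by lra. unfold x.
  rewrite <- Rpower_mult_distr by (unfold Rpower; apply exp_pos).
  rewrite !Rpower_mult.
  replace (- / INR r * INR r)%R with (Ropp 1)%R by (field; lra).
  rewrite (Rpower_Ropp (INR Dn) 1), Rpower_1 by lra.
  f_equal. f_equal. ring. }
assert (hn1 : (Rpower (INR nn) (- (eps * INR r)) <= / (INR nn ^ t))%R).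
{ rewrite <- Rpower_pow by lra. rewrite <- Rpower_Ropp.
  apply Rle_Rpower; lra. }
assert (hyr : (y ^ r = INR bn ^ r / INR Mn ^ r)%R).
{ unfold y, Rdiv. rewrite Rpow_mult_distr, pow_inv. reflexivity. }
assert (hM' : (INR Mn ^ r <= INR Dn * INR nn ^ t * INR bn ^ r)%R).
{ rewrite <- !pow_INR, <- !mult_INR. apply le_INR. exact hM. }
assert (ntp : (0 < INR nn ^ t)%R) by (apply pow_lt; lra).
assert (brp : (0 < INR bn ^ r)%R) by (apply pow_lt; lra).
assert (Mrp : (0 < INR Mn ^ r)%R) by (apply pow_lt; lra).
assert (hle : (x ^ r <= y ^ r)%R).
{ rewrite hxr, hyr.
  apply Rle_trans with (/ INR Dn * / INR nn ^ t)%R.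
  - apply Rmult_le_compat_l; [left; apply Rinv_0_lt_compat; lra | exact hn1].
  - rewrite <- Rinv_mult. unfold Rdiv.
    apply Rmult_le_reg_r with (INR Dn * INR nn ^ t * INR Mn ^ r)%R.
    { apply Rmult_lt_0_compat; [apply Rmult_lt_0_compat|]; lra. }
    replace (/ (INR Dn * INR nn ^ t) * (INR Dn * INR nn ^ t * INR Mn ^ r))%R
      with (INR Mn ^ r)%R by (field; lra).
    replace (INR bn ^ r * / INR Mn ^ r * (INR Dn * INR nn ^ t * INR Mn ^ r))%R
      with (INR Dn * INR nn ^ t * INR bn ^ r)%R by (field; lra).
    exact hM'. }
destruct (Rle_or_lt x y) as [h|h]; [exact h|].
exfalso. destruct r as [|k]; [lia|].
assert (h2 := pow_lt_strict y x k (Rlt_le _ _ yp) h). lra.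
Qed.

Lemma choose_r (t : nat) (eps : R) : (0 < eps)%R ->
  exists r : nat, (0 < r)%nat /\ (INR t <= INR r * eps)%R.
Proof.
intros he.
assert (htp : (0 < INR t + 1)%R) by (generalize (pos_INR t); lra).
destruct (archimed_cor1 (eps / (INR t + 1)) (Rdiv_lt_0_compat _ _ he htp)) as [N [hN hN0]].
exists N; split; [exact hN0|].
assert (hNp : (0 < INR N)%R) by (apply lt_0_INR; exact hN0).
assert (h := Rmult_lt_compat_l (INR N * (INR t + 1)) _ _ (Rmult_lt_0_compat _ _ hNp htp) hN).
replace (INR N * (INR t + 1) * / INR N)%R with (INR t + 1)%R in h by (field; lra).
replace (INR N * (INR t + 1) * (eps / (INR t + 1)))%R with (INR N * eps)%R in h by (field; lra).
lra.
Qed.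


From HB Require Import structures.
From mathcomp Require Import all_boot all_order all_algebra zify ring.
Set Implicit Arguments. Unset Strict Implicit. Unset Printing Implicit Defensive.
Import Order.TTheory GRing.Theory Num.Theory.
Local Open Scope ring_scope.

Lemma card_bigcup_le (I T : finType) (P : {pred I}) (F : I -> {set T}) :
  (#|\bigcup_(i in P) F i| <= \sum_(i in P) #|F i|)%N.
Proof.
apply: (big_ind2 (fun (A : {set T}) (k : nat) => #|A| <= k)%N).
- by rewrite cards0.
- move=> A a B b hA hB; apply: leq_trans (leq_card_setU A B) _.
  exact: leq_add.
- by [].
Qed.

Lemma y0_proof (kp km : nat) : (km < kp + km + 1)%N.
Proof. by rewrite addn1 ltnS leq_addl. Qed.

Definition y0 (kp km : nat) : 'I_(kp + km + 1) := Ordinal (y0_proof kp km).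

Definition vecf (n kp km : nat) (f : {ffun 'I_n -> 'I_(kp + km + 1)}) : 'rV[int]_n :=
  \row_i ((nat_of_ord (f i))%:Z - km%:Z).

Definition Bset (n t kp km : nat) : {set {ffun 'I_n -> 'I_(kp + km + 1)}} :=
  [set f : {ffun 'I_n -> 'I_(kp + km + 1)} |
       inB t kp km (\row_i ((nat_of_ord (f i))%:Z - km%:Z))].

Lemma card_BE n t kp km : card_B n t kp km = #|Bset n t kp km|.
Proof. by []. Qed.

Definition supp (n kp km : nat) (f : {ffun 'I_n -> 'I_(kp + km + 1)}) : {set 'I_n} :=
  [set i | f i != y0 kp km].

Lemma vecf_eq0 n kp km (f : {ffun 'I_n -> 'I_(kp + km + 1)}) i :
  (vecf f ord0 i == 0) = (f i == y0 kp km).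
Proof.
rewrite mxE subr_eq0 eqz_nat; apply/eqP/eqP => [h|-> //].
by apply: val_inj.
Qed.

Lemma supp_card n t kp km f : f \in Bset n t kp km -> (#|supp f| <= t)%N.
Proof.
rewrite inE => /andP[_ hw].
apply: leq_trans hw; rewrite /wt; apply: eq_leq; apply: eq_card => i.
by rewrite !inE -(vecf_eq0 f i).
Qed.

Definition phi (n M : nat) (a : {ffun 'I_n -> 'I_M}) (x : 'rV[int]_n) : int :=
  \sum_i x ord0 i * (nat_of_ord (a i))%:Z.

Lemma phiB n M (a : {ffun 'I_n -> 'I_M}) x y : phi a (x - y) = phi a x - phi a y.
Proof.
rewrite /phi -sumrB; apply: eq_bigr => i _; by rewrite !mxE mulrBl.
Qed.

Lemma phi0 n M (a : {ffun 'I_n -> 'I_M}) : phi a 0 = 0.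
Proof. by rewrite /phi big1 // => i _; rewrite mxE mul0r. Qed.


Definition Ucup n kp km r (w : {ffun 'I_r.+1 -> {ffun 'I_n -> 'I_(kp + km + 1)}})
  (j : 'I_r.+1) : {set 'I_n} :=
  \bigcup_(l : 'I_r.+1 | (l < j)%N) supp (w l).

Definition goodw n kp km r (w : {ffun 'I_r.+1 -> {ffun 'I_n -> 'I_(kp + km + 1)}}) :=
  [forall j : 'I_r.+1, (0 < j)%N ==> ~~ (supp (w j) \subset Ucup w j)].

Definition badw n kp km r m (a : {ffun 'I_n -> 'I_m.+1})
  (w : {ffun 'I_r.+1 -> {ffun 'I_n -> 'I_(kp + km + 1)}}) :=
  [forall j : 'I_r.+1, (phi a (vecf (w j)) == phi a (vecf (w ord0)) %[mod (m.+1)%:Z])%Z].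

Definition spec n kp km r (i0 : 'I_n) (w : {ffun 'I_r.+1 -> {ffun 'I_n -> 'I_(kp + km + 1)}})
  (j : 'I_r.+1) : 'I_n :=
  odflt i0 [pick i in supp (w j) :\: Ucup w j].

Definition Sset n kp km r (i0 : 'I_n) (w : {ffun 'I_r.+1 -> {ffun 'I_n -> 'I_(kp + km + 1)}}) :=
  [set spec i0 w j | j in [set j : 'I_r.+1 | (0 < j)%N]].

Lemma spec_in n kp km r (i0 : 'I_n) w (j : 'I_r.+1) :
  @goodw n kp km r w -> (0 < j)%N ->
  spec i0 w j \in supp (w j) /\ spec i0 w j \notin Ucup w j.
Proof.
move=> /forallP /(_ j); rewrite /spec => h hj; move: h; rewrite hj /= => hns.
case: pickP => [x|hx] /=; first by rewrite inE => /andP[-> ->].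
exfalso; move/negP: hns; apply; apply/subsetP => x xs.
by have := hx x; rewrite /= in_setD xs andbT => /negbFE.
Qed.

Lemma supp_sub_Ucup n kp km r (w : {ffun 'I_r.+1 -> {ffun 'I_n -> 'I_(kp + km + 1)}}) (l j : 'I_r.+1) :
  (l < j)%N -> supp (w l) \subset @Ucup n kp km r w j.
Proof. by move=> hl; apply: (bigcup_sup l). Qed.

Lemma notin_supp n kp km (f : {ffun 'I_n -> 'I_(kp + km + 1)}) i :
  i \notin supp f -> vecf f ord0 i = 0.
Proof. by rewrite inE negbK => h; apply/eqP; rewrite vecf_eq0. Qed.

Lemma card_Sset n kp km r (i0 : 'I_n) w :
  @goodw n kp km r w -> #|Sset i0 w| = r.
Proof.
move=> g; rewrite /Sset card_in_imset.
  have -> : [set j : 'I_r.+1 | (0 < j)%N] = [set~ ord0].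
    by apply/setP => j; rewrite !inE lt0n -val_eqE.
  by rewrite cardsC1 card_ord.
move=> l j; rewrite !inE => hl hj heq.
have [hls hlU] := spec_in i0 g hl; have [hjs hjU] := spec_in i0 g hj.
case: (ltngtP l j) => hlj; last exact: val_inj.
- exfalso; move/negP: hjU; apply; rewrite -heq.
  exact: (subsetP (supp_sub_Ucup w hlj)).
- exfalso; move/negP: hlU; apply; rewrite heq.
  exact: (subsetP (supp_sub_Ucup w hlj)).
Qed.


Lemma phi_diff n M (a a' : {ffun 'I_n -> 'I_M}) x :
  phi a x - phi a' x = \sum_i x ord0 i * ((nat_of_ord (a i))%:Z - (nat_of_ord (a' i))%:Z).
Proof. by rewrite /phi -sumrB; apply: eq_bigr => i _; rewrite mulrBr. Qed.

Lemma vecfB n kp km (f g : {ffun 'I_n -> 'I_(kp + km + 1)}) i :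
  (vecf f - vecf g) ord0 i = vecf f ord0 i - vecf g ord0 i.
Proof. by rewrite /vecf !mxE. Qed.

Lemma bad_inj n kp km r m (i0 : 'I_n) (w : {ffun 'I_r.+1 -> {ffun 'I_n -> 'I_(kp + km + 1)}})
  (a a' : {ffun 'I_n -> 'I_m.+1}) :
  (forall c : nat, (0 < c <= kp + km)%N -> coprime c m.+1) ->
  goodw w -> badw a w -> badw a' w ->
  (forall i, i \notin Sset i0 w -> a i = a' i) -> a = a'.
Proof.
move=> cop g ba ba' hsame.
have key : forall k (j : 'I_r.+1), (j < k)%N -> (0 < j)%N ->
    a (spec i0 w j) = a' (spec i0 w j).
  elim=> [//|k IH] j hjk hj0.
  case: (ltnP j k) => hjk'; first exact: IH.
  have IHj : forall l : 'I_r.+1, (l < j)%N -> (0 < l)%N ->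
      a (spec i0 w l) = a' (spec i0 w l).
    by move=> l hl hl0; apply: IH => //; lia.
  set i1 := spec i0 w j.
  have [hi1s hi1U] := spec_in i0 g hj0.
  set x := vecf (w j) - vecf (w ord0).
  have hdiv : ((m.+1)%:Z %| phi a x - phi a' x)%Z.
    have h1 := forallP ba j; have h2 := forallP ba' j.
    rewrite eqz_mod_dvd -phiB in h1; rewrite eqz_mod_dvd -phiB in h2.
    exact: rpredB.
  rewrite phi_diff (bigD1 i1) //= big1 ?addr0 in hdiv; last first.
    move=> i hi.
    case: (boolP (i \in Sset i0 w)) => hiS; last by rewrite (hsame i hiS) subrr mulr0.
    move/imsetP: hiS => [l]; rewrite inE => hl hieq; rewrite hieq in hi *.
    case: (ltngtP l j) => hlj.
    - by rewrite IHj // subrr mulr0.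
    - have [_ hlU] := spec_in i0 g hl.
      have hj : spec i0 w l \notin supp (w j).
        by apply: contra hlU; apply: (subsetP (supp_sub_Ucup w hlj)).
      have h0 : spec i0 w l \notin supp (w ord0).
        by apply: contra hlU; apply: (subsetP (supp_sub_Ucup w _)).
      by rewrite /x vecfB (notin_supp hj) (notin_supp h0) subrr mul0r.
    - have e : l = j by apply: val_inj.
      by exfalso; move/negP: hi; apply; rewrite e.
  have h0 : i1 \notin supp (w ord0).
    by apply: contra hi1U; apply: (subsetP (supp_sub_Ucup w _)).
  rewrite /x vecfB (notin_supp h0) subr0 in hdiv.
  set c := vecf (w j) ord0 i1 in hdiv.
  have cnz : c != 0 by rewrite /c vecf_eq0; rewrite inE in hi1s.
  have cbound : (0 < `|c| <= kp + km)%N.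
    apply/andP; split; first by rewrite absz_gt0.
    rewrite /c mxE; have := ltn_ord (w j i1); lia.
  have cz : coprimez (m.+1)%:Z c by rewrite coprimezE coprime_sym; exact: cop.
  rewrite Gauss_dvdzr // -eqz_mod_dvd !modz_nat eqz_nat in hdiv.
  rewrite !modn_small // in hdiv.
  by apply: val_inj; apply/eqP.
apply/ffunP => i.
case: (boolP (i \in Sset i0 w)) => hiS; last exact: hsame.
move/imsetP: hiS => [l]; rewrite inE => hl ->.
exact: (key r.+1).
Qed.


Lemma card_bad n kp km r m (i0 : 'I_n) (w : {ffun 'I_r.+1 -> {ffun 'I_n -> 'I_(kp + km + 1)}}) :
  (forall c : nat, (0 < c <= kp + km)%N -> coprime c m.+1) ->
  goodw w -> (#|[set a : {ffun 'I_n -> 'I_m.+1} | badw a w]| <= m.+1 ^ (n - r))%N.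
Proof.
move=> cop g.
pose res (a : {ffun 'I_n -> 'I_m.+1}) : {ffun 'I_n -> 'I_m.+1} :=
  [ffun i => if i \in Sset i0 w then ord0 else a i].
rewrite -(card_in_imset (f := res)); last first.
  move=> a a'; rewrite !inE => ba ba' he.
  apply: (bad_inj (i0:=i0) cop g ba ba') => i hi.
  by have := congr1 (fun f : {ffun 'I_n -> 'I_m.+1} => f i) he; rewrite /res !ffunE (negbTE hi).
have -> : (m.+1 ^ (n - r) = #|pffun_on (@ord0 m) (~: Sset i0 w) predT|)%N.
  rewrite card_pffun_on.
  have -> : #|~: Sset i0 w| = (n - r)%N.
    by rewrite [LHS]cardsCs setCK card_ord card_Sset.
  by rewrite (card_ord m.+1).
apply: subset_leq_card; apply/subsetP => f /imsetP [a _ ->].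
apply/pffun_onP; split; last by move=> y _.
apply/subsetP => i; rewrite !inE /res ffunE.
by case: (i \in Sset i0 w).
Qed.

Lemma exists_good_a n t kp km r m (i0 : 'I_n) :
  (forall c : nat, (0 < c <= kp + km)%N -> coprime c m.+1) ->
  (r <= n)%N ->
  (#|Bset n t kp km| ^ r.+1 < m.+1 ^ r)%N ->
  exists a : {ffun 'I_n -> 'I_m.+1},
    forall w : {ffun 'I_r.+1 -> {ffun 'I_n -> 'I_(kp + km + 1)}},
      (forall j, w j \in Bset n t kp km) -> goodw w -> ~~ badw a w.
Proof.
move=> cop hrn hB.
pose W := [set w : {ffun 'I_r.+1 -> {ffun 'I_n -> 'I_(kp + km + 1)}} |
             [forall j, w j \in Bset n t kp km] && goodw w].
pose BadA := \bigcup_(w in W) [set a : {ffun 'I_n -> 'I_m.+1} | badw a w].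
have hc : (#|BadA| < #|{ffun 'I_n -> 'I_m.+1}|)%N.
  apply: leq_ltn_trans (card_bigcup_le _ _) _.
  apply: (@leq_ltn_trans (\sum_(w in W) m.+1 ^ (n - r))).
    apply: leq_sum => w; rewrite inE => /andP[_ g]; exact: card_bad.
  rewrite sum_nat_const card_ffun !card_ord.
  have hW : (#|W| <= #|Bset n t kp km| ^ r.+1)%N.
    have hsub : W \subset ffun_on (Bset n t kp km).
      by apply/subsetP => w; rewrite inE => /andP[/forallP h _]; apply/ffun_onP.
    by apply: leq_trans (subset_leq_card hsub) _; rewrite card_ffun_on card_ord.
  apply: (@leq_ltn_trans (#|Bset n t kp km| ^ r.+1 * m.+1 ^ (n - r))).
    by rewrite leq_mul2r hW orbT.
  have e : (m.+1 ^ n = m.+1 ^ r * m.+1 ^ (n - r))%N by rewrite -expnD subnKC.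
  by rewrite e ltn_pmul2r // expn_gt0.
case: (boolP [forall a, a \in BadA]) => h.
  exfalso; move: hc; rewrite ltnNge; move/negP; apply.
  by apply: subset_leq_card; apply/subsetP => a _; exact: (forallP h a).
move/forallPn: h => [a ha]; exists a => w hw g; apply/negP => hb.
move/negP: ha; apply; apply/bigcupP; exists w; last by rewrite inE.
by rewrite inE g andbT; apply/forallP.
Qed.


Lemma fiber_bound n t kp km r m (a : {ffun 'I_n -> 'I_m.+1})
  (F : {set {ffun 'I_n -> 'I_(kp + km + 1)}}) (c : int) :
  (forall w : {ffun 'I_r.+1 -> {ffun 'I_n -> 'I_(kp + km + 1)}},
      (forall j, w j \in Bset n t kp km) -> goodw w -> ~~ badw a w) ->
  F \subset Bset n t kp km ->
  (forall f, f \in F -> (phi a (vecf f) == c %[mod (m.+1)%:Z])%Z) ->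
  (#|F| <= (kp + km + 1) ^ (t * r))%N.
Proof.
move=> hgood hsub hc.
rewrite leqNgt; apply/negP => hF.
have [f0 hf0] : exists f0, f0 \in F.
  by apply/card_gt0P; apply: leq_ltn_trans hF.
have claim : forall k, (k <= r)%N ->
  exists w : {ffun 'I_r.+1 -> {ffun 'I_n -> 'I_(kp + km + 1)}},
    (forall j : 'I_r.+1, (j <= k)%N -> w j \in F) /\
    (forall j : 'I_r.+1, (0 < j)%N -> (j <= k)%N -> ~~ (supp (w j) \subset Ucup w j)).
  elim=> [_|k IH hk].
    exists [ffun _ => f0]; split => j; first by rewrite ffunE.
    move=> h1 h2; exfalso; lia.
  have [w [hwF hwg]] := IH (ltnW hk).
  pose U := \bigcup_(l : 'I_r.+1 | (l <= k)%N) supp (w l).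
  have hU : (#|U| <= t * r)%N.
    apply: leq_trans (card_bigcup_le _ _) _.
    apply: (@leq_trans (\sum_(l : 'I_r.+1 | (l <= k)%N) t)).
      apply: leq_sum => l hl; apply: (supp_card (kp:=kp)).
      by apply: (subsetP hsub); exact: hwF.
    rewrite sum_nat_cond_const mulnC leq_mul2l; apply/orP; right.
    have hs : [set l : 'I_r.+1 | (l <= k)%N] \subset [set~ (@ord_max r)].
      apply/subsetP => l; rewrite !inE => hl; apply/eqP => e.
      move: hl; rewrite e /=; lia.
    by apply: leq_trans (subset_leq_card hs) _; rewrite cardsC1 card_ord.
  have [f hfF hfU] : exists2 f, f \in F & ~~ (supp f \subset U).
    apply/forall_inPn; apply/negP => hall; move: hF; rewrite ltnNge => /negP; apply.
    have hs : F \subset pffun_on (y0 kp km) U predT.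
      apply/subsetP => f hf; apply/pffun_onP; split; last by move=> y _.
      apply/subsetP => i hi; apply: (subsetP (forall_inP hall f hf)).
      by rewrite inE.
    apply: leq_trans (subset_leq_card hs) _.
    by rewrite card_pffun_on card_ord leq_pexp2l // addn1.
  exists [ffun j : 'I_r.+1 => if (j == k.+1 :> nat) then f else w j].
  have UE : forall j : 'I_r.+1, (j <= k.+1)%N ->
      Ucup [ffun j : 'I_r.+1 => if (j == k.+1 :> nat) then f else w j] j = Ucup w j.
    move=> j hj; apply: eq_bigr => l hl; rewrite ffunE.
    by case: eqP => // e; exfalso; move: hl; rewrite e; lia.
  split.
    move=> j hj; rewrite ffunE; case: eqP => [_|hne]; first done.
    by apply: hwF; lia.
  move=> j hj0 hjk; rewrite UE // ffunE.
  case: eqP => [e|hne]; last by apply: hwg; lia.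
  have -> : Ucup w j = U.
    by apply: eq_bigl => l; rewrite e.
  exact: hfU.
have [w [hwF hwg]] := claim r (leqnn r).
have hb : badw a w.
  apply/forallP => j; apply/eqP.
  by rewrite (eqP (hc _ (hwF j (leq_ord j)))) (eqP (hc _ (hwF ord0 (leq0n r)))).
have hB : forall j, w j \in Bset n t kp km.
  by move=> j; apply: (subsetP hsub); apply: hwF; exact: leq_ord.
have hg : goodw w.
  by apply/forallP => j; apply/implyP => hj; apply: hwg => //; exact: leq_ord.
by move/negP: (hgood w hB hg).
Qed.


Definition Lat n m (a : {ffun 'I_n -> 'I_m.+1}) (x : 'rV[int]_n) : Prop :=
  ((m.+1)%:Z %| phi a x)%Z.

Lemma Lat_lattice n m (a : {ffun 'I_n -> 'I_m.+1}) : is_lattice (Lat a).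
Proof.
split; first by rewrite /Lat phi0 dvdz0.
by move=> x y hx hy; rewrite /Lat phiB rpredB.
Qed.

Definition vecM n m (g : {ffun 'I_n -> 'I_m.+1}) : 'rV[int]_n :=
  \row_i (nat_of_ord (g i))%:Z.

Definition res n m (a : {ffun 'I_n -> 'I_m.+1}) (x : 'rV[int]_n) : 'I_m.+1 :=
  inord `|(phi a x %% (m.+1)%:Z)%Z|.

Lemma absmod (m : nat) (z : int) : ((`|(z %% (m.+1)%:Z)%Z|%N)%:Z = (z %% (m.+1)%:Z)%Z).
Proof. by rewrite abszE ger0_norm // modz_ge0. Qed.

Lemma absmod_lt (m : nat) (z : int) : (`|(z %% (m.+1)%:Z)%Z| < m.+1)%N.
Proof. by rewrite -ltz_nat absmod ltz_pmod. Qed.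

Lemma res_eq n m (a : {ffun 'I_n -> 'I_m.+1}) x y :
  (res a x == res a y) = (phi a x == phi a y %[mod (m.+1)%:Z])%Z.
Proof.
rewrite -val_eqE /res /= !inordK ?absmod_lt //.
by rewrite -eqz_nat !absmod.
Qed.

Definition red n m (z : 'rV[int]_n) : {ffun 'I_n -> 'I_m.+1} :=
  [ffun i => inord `|(z ord0 i %% (m.+1)%:Z)%Z|].

Lemma red_mod n m (a : {ffun 'I_n -> 'I_m.+1}) z :
  (phi a (vecM (red m z)) == phi a z %[mod (m.+1)%:Z])%Z.
Proof.
rewrite eqz_mod_dvd -phiB /phi; apply: rpred_sum => i _.
rewrite !mxE ffunE inordK ?absmod_lt // absmod.
apply: dvdz_mulr.
set M := (m.+1)%:Z; set u := z ord0 i.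
have -> : ((u %% M)%Z - u = - ((u %/ M)%Z * M)).
  by rewrite {2}(divz_eq u M); ring.
by rewrite rpredN dvdz_mull.
Qed.

Definition Img n m (a : {ffun 'I_n -> 'I_m.+1}) : {set 'I_m.+1} :=
  [set res a (vecM g) | g : {ffun 'I_n -> 'I_m.+1}].

Definition rep n m (a : {ffun 'I_n -> 'I_m.+1}) (c : 'I_m.+1) : {ffun 'I_n -> 'I_m.+1} :=
  odflt [ffun _ => ord0] [pick g | res a (vecM g) == c].

Lemma rep_spec n m (a : {ffun 'I_n -> 'I_m.+1}) c :
  c \in Img a -> res a (vecM (rep a c)) = c.
Proof.
move=> /imsetP [g _ ->]; rewrite /rep.
case: pickP => [g' /eqP //|h].
by have := h g; rewrite eqxx.
Qed.

Lemma Lat_index n m (a : {ffun 'I_n -> 'I_m.+1}) : has_index (Lat a) #|Img a|.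
Proof.
exists (fun i => vecM (rep a (enum_val i))); split.
  move=> z.
  have hc : res a (vecM (red m z)) \in Img a by apply: imset_f.
  exists (enum_rank_in hc (res a (vecM (red m z)))).
  rewrite enum_rankK_in //.
  have := rep_spec hc => /eqP; rewrite res_eq => h1.
  have h2 := red_mod a z.
  rewrite /Lat phiB -eqz_mod_dvd; apply/eqP.
  by rewrite -(eqP h2) (eqP h1).
move=> i j; rewrite /Lat phiB -eqz_mod_dvd -res_eq !rep_spec ?enum_valP //.
by move/eqP; apply: enum_val_inj.
Qed.

Lemma card_Img n m (a : {ffun 'I_n -> 'I_m.+1}) : (0 < #|Img a| <= m.+1)%N.
Proof.
apply/andP; split.
  by apply/card_gt0P; exists (res a (vecM ([ffun _ => ord0] : {ffun 'I_n -> 'I_m.+1}))); apply: imset_f.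
by rewrite -[X in (_ <= X)%N](card_ord m.+1); apply: max_card.
Qed.


Definition enc n kp km (x : 'rV[int]_n) : {ffun 'I_n -> 'I_(kp + km + 1)} :=
  [ffun i => insubd (y0 kp km) (absz (x ord0 i + km%:Z))].

Lemma vecf_enc n t kp km (x : 'rV[int]_n) :
  inB t kp km x -> vecf (@enc n kp km x) = x.
Proof.
move=> /andP[/forallP hb _]; apply/rowP => i.
have /andP[h1 h2] := hb i.
rewrite mxE ffunE val_insubd.
have e : x 0 i = x ord0 i by congr (x _ _); apply: val_inj.
rewrite e.
case: ifP => h; first lia.
move/negbT: h; rewrite -leqNgt => h; exfalso; lia.
Qed.

Lemma enc_in n t kp km (x : 'rV[int]_n) :
  inB t kp km x -> @enc n kp km x \in Bset n t kp km.
Proof. by move=> h; rewrite inE; have := vecf_enc h; rewrite /vecf => ->. Qed.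

Lemma packs n t kp km r m (a : {ffun 'I_n -> 'I_m.+1}) :
  (forall w : {ffun 'I_r.+1 -> {ffun 'I_n -> 'I_(kp + km + 1)}},
      (forall j, w j \in Bset n t kp km) -> goodw w -> ~~ badw a w) ->
  lambda_packs (inB t kp km) (Lat a) ((kp + km + 1) ^ (t * r)).
Proof.
move=> hg z s us hs.
pose F := [set f in Bset n t kp km | (phi a (vecf f) == phi a z %[mod (m.+1)%:Z])%Z].
have hsF : (size s <= #|F|)%N.
  rewrite -(size_map (fun v => @enc n kp km (z - v))) cardE.
  apply: uniq_leq_size.
    rewrite map_inj_in_uniq // => v v' hv hv' he.
    have [_ hBv] := hs v hv; have [_ hBv'] := hs v' hv'.
    have := congr1 (@vecf n kp km) he; rewrite !(vecf_enc hBv) !(vecf_enc hBv').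
    by move/addrI/oppr_inj.
  move=> f /mapP [v hv ->]; rewrite mem_enum inE.
  have [hLv hBv] := hs v hv.
  rewrite (enc_in hBv) /= (vecf_enc hBv) phiB eqz_mod_dvd.
  by rewrite addrAC subrr sub0r rpredN.
apply: leq_trans hsF _.
apply: (fiber_bound (c := phi a z) hg).
  by apply/subsetP => f; rewrite inE => /andP[].
by move=> f; rewrite inE => /andP[].
Qed.

Lemma Bset_pos n t kp km : (0 < #|Bset n t kp km|)%N.
Proof.
apply/card_gt0P; exists [ffun _ => y0 kp km]; rewrite inE; apply/andP; split.
  by apply/forallP => i; rewrite !mxE ffunE /=; apply/andP; split; lia.
rewrite /wt; apply: leq_trans (leq0n t); rewrite leqn0; apply/eqP; apply: eq_card0 => i.
by rewrite !inE !mxE ffunE /= subrr.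
Qed.


Local Close Scope ring_scope.

Definition build n t kp km (g : {ffun 'I_t -> option 'I_n * 'I_(kp + km + 1)}) :
  {ffun 'I_n -> 'I_(kp + km + 1)} :=
  [ffun i => match [pick j | (g j).1 == Some i] with
             | Some j => (g j).2 | None => y0 kp km end].

Lemma card_Bset_le n t kp km : #|Bset n t kp km| <= (n.+1 * (kp + km + 1)) ^ t.
Proof.
have hs : Bset n t kp km \subset [set @build n t kp km g | g in predT].
  apply/subsetP => f hf.
  pose e := enum (supp f).
  have hse : size e <= t by rewrite /e -cardE; exact: supp_card hf.
  pose g := [ffun j : 'I_t => (nth None (map Some e) j,
              match nth None (map Some e) j with Some i => f i | None => y0 kp km end)].
  apply/imsetP; exists g => //; apply/ffunP => i; rewrite /build ffunE.
  case: pickP => [j /eqP hj | hn].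
    by rewrite ffunE /=; rewrite ffunE /= in hj; rewrite hj.
  case: (boolP (i \in supp f)) => hi; last by move: hi; rewrite inE negbK => /eqP.
  have hie : i \in e by rewrite /e mem_enum.
  have hlt : index i e < t by apply: leq_trans hse; rewrite index_mem.
  have := hn (Ordinal hlt); rewrite ffunE /=.
  rewrite (nth_map i) ?index_mem // nth_index //.
  by rewrite eqxx.
apply: leq_trans (subset_leq_card hs) _.
apply: leq_trans (leq_imset_card _ _) _.
by rewrite card_ffun card_prod card_option !card_ord.
Qed.


Lemma exists_M (K b r : nat) : 0 < r -> 0 < b ->
  exists m, (forall c, 0 < c <= K -> coprime c m.+1) /\
            b ^ r.+1 < m.+1 ^ r /\ m.+1 ^ r <= K`!.+1 ^ r * b ^ r.+1.
Proof.
move=> hr hb.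
have hex : exists s, b ^ r.+1 < (K`! * s).+1 ^ r.
  exists (b ^ r.+1).
  apply: (@leq_trans (K`! * b ^ r.+1).+1).
    by rewrite ltnS leq_pmull // fact_gt0.
  by rewrite -{1}(expn1 (K`! * b ^ r.+1).+1) leq_pexp2l.
case: (ex_minnP hex) => s hs hmin.
exists (K`! * s); split; last split => //.
  move=> c /andP[c0 cK].
  apply: (@coprime_dvdl _ (K`! * s)); last exact: coprimenS.
  by apply: dvdn_mulr; apply: dvdn_fact; rewrite c0.
have s0 : 0 < s.
  rewrite lt0n; apply/negP => /eqP e; move: hs; rewrite e muln0 exp1n.
  rewrite ltnS leqn0 => /eqP h0; have := expn_gt0 b r.+1; by rewrite hb h0.
have hprev : (K`! * s.-1).+1 ^ r <= b ^ r.+1.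
  rewrite leqNgt; apply/negP => h; have := hmin _ h; lia.
apply: (@leq_trans (((K`! * s.-1).+1 * K`!.+1) ^ r)).
  rewrite leq_exp2r //.
  have := fact_gt0 K; nia.
by rewrite expnMn mulnC leq_mul2l hprev orbT.
Qed.


Lemma expn_pow (x k : nat) : (x ^ k)%N = Nat.pow x k.
Proof. elim: k => [//|k IH]; by rewrite expnS IH mulnE. Qed.

Theorem corollary10 (kp km t : nat) :
  (km <= kp)%N -> (0 < kp + km)%N -> (0 < t)%N ->
  forall eps : R, Rlt R0 eps ->
  exists lam : nat, exists c : R, Rlt R0 c /\
    forall N : nat, exists n : nat, (N <= n)%N /\
      exists (L : 'rV[int]_n -> Prop) (v : nat),
        is_lattice L /\ has_index L v /\
        lambda_packs (inB t kp km) L lam /\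
        Rle (Rmult c (Rpower (INR n) (Ropp eps)))
            (Rdiv (INR (card_B n t kp km)) (INR v)).
Proof.
move=> hk hK ht eps heps.
have [r [hrP hrt]] := choose_r t eps heps.
have hr : (0 < r)%N by apply/ssrnat.ltP.
pose Dn := ((kp + km)`!.+1 ^ r * (2 * (kp + km + 1)) ^ t)%N.
exists ((kp + km + 1) ^ (t * r))%N, (Rpower (INR Dn) (- / INR r)).
split; first by rewrite /Rpower; apply: exp_pos.
move=> N.
pose n := (N + r + 1)%N.
exists n; split; first by rewrite /n; lia.
have n0 : (0 < n)%N by rewrite /n; lia.
have rn : (r <= n)%N by rewrite /n; lia.
pose i0 : 'I_n := Ordinal n0.
have hbpos : (0 < #|Bset n t kp km|)%N := Bset_pos n t kp km.
have [m [cop [hB hMb]]] := exists_M (kp + km) hr hbpos.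
have [a ha] := exists_good_a i0 cop rn hB.
exists (Lat a), #|Img a|.
split; first exact: Lat_lattice.
split; first exact: Lat_index.
split; first exact: packs ha.
have /andP [v0 vM] := card_Img a.
have hbub := card_Bset_le n t kp km.
have hM : (m.+1 ^ r <= Dn * n ^ t * #|Bset n t kp km| ^ r)%N.
  apply: leq_trans hMb _.
  rewrite expnS /Dn mulnA -[X in (X <= _)%N]mulnA -[X in (_ <= X)%N]mulnA.
  rewrite -[X in (_ <= X)%N]mulnA leq_mul2l; apply/orP; right.
  rewrite mulnA leq_mul2r; apply/orP; right.
  apply: leq_trans hbub _; rewrite -expnMn leq_exp2r //.
  rewrite /n; nia.
have hbr : (0 < #|Bset n t kp km|)%coq_nat by apply/ssrnat.ltP.
apply: (real_bound Dn n #|Bset n t kp km| m.+1 #|Img a| r t eps).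
- exact: hrP.
- by apply/ssrnat.ltP; rewrite /Dn muln_gt0 !expn_gt0 muln_gt0 addn1.
- by apply/ssrnat.ltP.
- exact: hbr.
- by apply/ssrnat.ltP.
- by apply/ssrnat.leP.
- exact: hrt.
- apply/ssrnat.leP; rewrite -!expn_pow -!mulnE; exact: hM.
Qed.
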